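(* Let $n\ge 1$, $N=\{1,\dots,n\}$, $A=[0,1]$, and let $f$ be an OWA mechanism with weights $w_1,\dots,w_n\in[0,1]$, $\sum_j w_j=1$. Then $f$ satisfies individual fair share (IFS) if and only if $w_1 \ge \frac1n$ and $w_n \ge \frac1n$.
   Context: A mechanism is a map $f:A^n\to A$ from profiles $x=(x_i)_{i\in N}$ of reported locations to a facility location. An OWA mechanism with weights $w_1,\dots,w_n$ returns $f(x)=\sum_{j=1}^n w_j x_{\pi(j)}$, where $\pi$ is a permutation of $N$ with $x_{\pi(1)}\le\dots\le x_{\pi(n)}$. The mechanism $f$ satisfies IFS if for every profile $x\in A^n$ and every $i\in N$, $|x_i - f(x)| \le 1-\frac1n$. *)

(* Defs.v *)
From mathcomp Require Import all_boot all_order all_algebra.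
From mathcomp Require Import reals.
Set Implicit Arguments. Unset Strict Implicit. Unset Printing Implicit Defensive.
Import Order.TTheory GRing.Theory Num.Theory.
Local Open Scope ring_scope.

(* Agents N = 'I_n (agent i+1 of the paper is i : 'I_n); domain A = [0,1]. *)
Definition in_A (R : realType) (a : R) : bool := (0 <= a) && (a <= 1).

Definition profile_in_A (R : realType) (n : nat) (x : 'I_n -> R) : Prop :=
  forall i, in_A (x i).

Definition sorted_profile (R : realType) (n : nat) (x : 'I_n -> R) : seq R :=
  sort <=%R [seq x i | i <- enum 'I_n].

(* OWA mechanism with weights w = [:: w_1; ...; w_n] (w`_j is w_{j+1}). *)
Definition owa (R : realType) (n : nat) (w : seq R) (x : 'I_n -> R) : R :=
  \sum_(j < n) w`_j * (sorted_profile x)`_j.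

Definition IFS (R : realType) (n : nat) (f : ('I_n -> R) -> R) : Prop :=
  forall x : 'I_n -> R, profile_in_A x ->
    forall i : 'I_n, `|x i - f x| <= 1 - n%:R^-1.

(* Main.v *)
Require Import Defs.
From mathcomp Require Import all_boot all_order all_algebra.
From mathcomp Require Import reals.
From mathcomp Require Import lra.
Import Order.TTheory GRing.Theory Num.Theory.
Local Open Scope ring_scope.

Lemma in_A_bool (R : realType) (b : bool) : in_A (b%:R : R).
Proof. by case: b; rewrite /in_A /= ?ler01 ?lexx. Qed.

Lemma bool_mono (R : realType) (p q : bool) : (p ==> q) -> (p%:R : R) <= q%:R.
Proof. by case: p; case: q => //= _; rewrite ?lexx ?ler01. Qed.

Lemma mono_ne0 (R : realType) k (a b : 'I_k.+1) : (a <= b)%N ->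
  (((a != ord0)%:R : R) <= (b != ord0)%:R).
Proof.
move=> hab; apply: bool_mono; apply/implyP.
rewrite -!(inj_eq val_inj) /= -!lt0n => ha; exact: leq_trans ha hab.
Qed.

Lemma mono_max (R : realType) k (a b : 'I_k.+1) : (a <= b)%N ->
  (((a == ord_max)%:R : R) <= (b == ord_max)%:R).
Proof.
move=> hab; apply: bool_mono; apply/implyP.
rewrite -!(inj_eq val_inj) /= => /eqP ha; rewrite eqn_leq -ltnS ltn_ord /=.
by move: hab; rewrite ha.
Qed.

Lemma sp_mono (R : realType) k (x : 'I_k.+1 -> R) :
  (forall i j : 'I_k.+1, (i <= j)%N -> x i <= x j) ->
  forall j : 'I_k.+1, (sorted_profile x)`_j = x j.
Proof.
move=> hx j; rewrite /sorted_profile sorted_sort; last first.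
  apply: (homo_sorted (e := relpre val leq)).
    by move=> a b; apply: hx.
  by rewrite -sorted_map val_enum_ord iota_sorted.
  exact: le_trans.
by rewrite (nth_map ord0) ?size_enum_ord ?ltn_ord // nth_ord_enum.
Qed.

Lemma sp_facts (R : realType) k (x : 'I_k.+1 -> R) : profile_in_A x ->
  let s := sorted_profile x in
  [/\ size s = k.+1, forall j, (j < k.+1)%N -> 0 <= s`_j <= 1,
      forall j, (j < k.+1)%N -> s`_0 <= s`_j <= s`_k &
      forall i, s`_0 <= x i <= s`_k].
Proof.
move=> hA s.
have hsz : size s = k.+1 by rewrite size_sort size_map size_enum_ord.
have hsort : sorted <=%R s by apply: sort_sorted; exact: le_total.
have hb : forall j, (j < k.+1)%N -> s`_0 <= s`_j <= s`_k.
  move=> j hj; apply/andP; split;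
  apply: (sorted_leq_nth le_trans le_refl 0 hsort); rewrite ?inE ?hsz //.
have h1 : forall j, (j < k.+1)%N -> 0 <= s`_j <= 1.
  move=> j hj; have : s`_j \in s by apply: mem_nth; rewrite hsz.
  rewrite mem_sort => /mapP [i _ ->]; exact: hA.
split=> // i.
have hin : x i \in s by rewrite mem_sort; apply: map_f; rewrite mem_enum.
have hidx : (index (x i) s < k.+1)%N by rewrite -hsz index_mem.
by have := hb _ hidx; rewrite nth_index.
Qed.

Theorem theorem3 (R : realType) (n : nat) (hn : (1 <= n)%N) (w : seq R)
  (hsize : size w = n)
  (hw01 : forall j : nat, (j < n)%N -> in_A w`_j)
  (hsum : \sum_(j < n) w`_j = 1) :
  IFS (@owa R n w) <-> (n%:R^-1 <= w`_0 /\ n%:R^-1 <= w`_(n.-1)).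
Proof.
case: n hn hsize hw01 hsum => // k _ hsize hw01 hsum /=.
split.
- move=> hI; split.
  + pose x : 'I_k.+1 -> R := fun i => (i != ord0)%:R.
    have hA : profile_in_A x by move=> i; apply: in_A_bool.
    have hf : owa w x = 1 - w`_0.
      rewrite /owa (eq_bigr (fun j : 'I_k.+1 => w`_j * (j != ord0 :> 'I_k.+1)%:R)); last first.
        move=> j _; rewrite sp_mono // => a b hab; exact: mono_ne0.
      rewrite big_ord_recl /= mulr0 add0r; move: hsum; rewrite big_ord_recl => hs.
      have -> : 1 - w`_0 = \sum_(j < k) w`_(bump 0 j) by rewrite -hs /= addrC addKr.
      by apply: eq_bigr => j _; rewrite mulr1.
    have := hI x hA ord0; rewrite hf /x eqxx /= => /ler_normlP [h _]; move: h; set a := w`_0; set b := (k.+1)%:R^-1; move=> h; lra.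
  + pose x : 'I_k.+1 -> R := fun i => (i == ord_max)%:R.
    have hA : profile_in_A x by move=> i; apply: in_A_bool.
    have hf : owa w x = w`_k.
      rewrite /owa (eq_bigr (fun j : 'I_k.+1 => w`_j * (j == ord_max :> 'I_k.+1)%:R)); last first.
        move=> j _; rewrite sp_mono // => a b hab; exact: mono_max.
      rewrite big_ord_recr /= eqxx mulr1 big1 ?add0r // => j _.
      have -> : (widen_ord (leqnSn k) j == ord_max) = false.
        by apply/eqP => /(congr1 val) /= hj; move: (ltn_ord j); rewrite hj ltnn.
      by rewrite mulr0.
    have := hI x hA ord_max; rewrite hf /x eqxx /= => /ler_normlP [_ h]; move: h; set a := w`_k; set b := (k.+1)%:R^-1; move=> h; lra.
- case=> h0 hk x hA i.
  have [hsz h01 hb hxi] := @sp_facts R k x hA.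
  set s := sorted_profile x in hsz h01 hb hxi.
  have hw : forall j, (j < k.+1)%N -> 0 <= w`_j <= 1 by move=> j /hw01.
  have hlo : owa w x - s`_0 <= 1 - w`_0.
    have -> : owa w x - s`_0 = \sum_(j < k.+1) w`_j * (s`_j - s`_0).
      rewrite /owa -/s; apply/esym.
      rewrite (eq_bigr (fun j : 'I_k.+1 => w`_j * s`_j - w`_j * s`_0)); last by move=> j _; rewrite mulrBr.
      by rewrite sumrB -mulr_suml hsum mul1r.
    move: hsum; rewrite !big_ord_recl /= subrr mulr0 add0r => hs.
    have -> : 1 - w`_0 = \sum_(j < k) w`_(bump 0 j) by rewrite -hs /= addrC addKr.
    apply: ler_sum => j _.
    have hj : (bump 0 j < k.+1)%N by rewrite /bump /= add1n ltnS ltn_ord.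
    have := hw _ hj; have := h01 _ hj; have := h01 0%N isT.
    move=> /andP [a b] /andP [c' d] /andP [e f].
    rewrite -[X in _ <= X]mulr1; apply: ler_wpM2l => //; lra.
  have hhi : s`_k - owa w x <= 1 - w`_k.
    have -> : s`_k - owa w x = \sum_(j < k.+1) w`_j * (s`_k - s`_j).
      rewrite /owa -/s; apply/esym.
      rewrite (eq_bigr (fun j : 'I_k.+1 => w`_j * s`_k - w`_j * s`_j)); last by move=> j _; rewrite mulrBr.
      by rewrite sumrB -mulr_suml hsum mul1r.
    move: hsum; rewrite !big_ord_recr /= subrr mulr0 addr0 => hs.
    have -> : 1 - w`_k = \sum_(j < k) w`_j by rewrite -hs /= addrK.
    apply: ler_sum => j _.
    have hj : (j < k.+1)%N by apply: ltnW; rewrite ltnS ltn_ord.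
    have := hw _ hj; have := h01 _ hj; have := h01 k (ltnSn k).
    move=> /andP [a b] /andP [c' d] /andP [e f].
    rewrite -[X in _ <= X]mulr1; apply: ler_wpM2l => //; lra.
  have := hxi i => /andP [a b].
  apply/ler_normlP; move: hlo hhi a b h0 hk; set fo := owa w x; set c := (k.+1)%:R^-1; set w0 := w`_0; set wk := w`_k; set s0 := s`_0; set sk := s`_k; set xi := x i; move=> *; split; lra.
Qed.
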